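(* For every positive integer $t$, every finite induced subgraph of $W'_t$ is triangle-free.
   Context: Construction of $G'_t$, $T'_t$, $W'_t$: build a countably infinite trigraph $G'_t$ (vertex set with two disjoint sets of edges, black and red; its total graph $\mathcal T(G'_t)$ uses all edges) and a rooted tree $T'_t$ on the same vertex set, partitioned into finite layers $L_0,L_1,\dots$ each inducing a left-to-right path of black edges. $L_0$ is a single vertex, the root. With $L_{\le i}=L_0\cup\dots\cup L_i$, layer $L_{i+1}$ is built (starting empty) as follows: for each $u\in L_i$ from left to right, let $N^\uparrow[u]:=(N_{\mathcal T(G'_t)}(u)\cap L_{\le i-1})\cup\{u\}$ and let $\mathcal B$ be the set of subsets of $N^\uparrow[u]$ in which every pair of distinct vertices is joined by a red edge of $G'_t$ (monochromatic red cliques). For every ordered pair $(B,R)$ of disjoint subsets of $N^\uparrow[u]$ with $B\in\mathcal B$ and $|B\cup R|\le t$: append a new vertex $v_{B,R}$ at the right end of $L_{i+1}$, joined by a black edge to the previously rightmost vertex of $L_{i+1}$ (if any), make it a child of $u$ in $T'_t$, add black edges from $v_{B,R}$ to all of $B$ and red edges to all of $R$; then append a further new vertex $v'_{B,R}$ at the right end of $L_{i+1}$, joined by a black edge to the previously rightmost vertex of $L_{i+1}$, and make it a child of $u$ in $T'_t$ (with no other edges). $W'_t$ is the graph on $V(G'_t)$ whose edges are the black edges of $G'_t$. *)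

(* Defs.v *)
From mathcomp Require Import all_boot.
Set Implicit Arguments. Unset Strict Implicit. Unset Printing Implicit Defensive.

(* Vertices of G'_t are natural numbers, numbered in order of creation.
   The root (L_0) is vertex 0.  A construction state records the number of
   vertices created so far, the black edges, the red edges (as lists of
   unordered pairs stored as ordered pairs) and the layers L_0, ..., L_k
   (each layer a left-to-right list of vertices). *)
Record tstate := TS {
  nv   : nat;
  blk  : seq (nat * nat);
  rd   : seq (nat * nat);
  lays : seq (seq nat) }.

Definition blackAdj (st : tstate) (x y : nat) : bool :=
  ((x, y) \in blk st) || ((y, x) \in blk st).
Definition redAdj (st : tstate) (x y : nat) : bool :=
  ((x, y) \in rd st) || ((y, x) \in rd st).
Definition totAdj (st : tstate) (x y : nat) : bool :=
  blackAdj st x y || redAdj st x y.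

Definition redClique (st : tstate) (B : seq nat) : bool :=
  all (fun x => all (fun y => (x == y) || redAdj st x y) B) B.

Fixpoint splits (s : seq nat) : seq (seq nat * seq nat) :=
  match s with
  | [::] => [:: ([::], [::])]
  | x :: s' =>
      flatten [seq [:: (x :: p.1, p.2); (p.1, x :: p.2); p] | p <- splits s']
  end.

(* Append v_{B,R} and v'_{B,R} at the right end of the current new layer cur. *)
Definition add_pair (st : tstate) (cur : seq nat) (BR : seq nat * seq nat)
  : tstate * seq nat :=
  let v := nv st in
  let v' := v.+1 in
  let pathE := if cur is [::] then [::] else [:: (last 0 cur, v)] in
  let blk' := blk st ++ pathE ++ [seq (v, b) | b <- BR.1] ++ [:: (v, v')] in
  let rd' := rd st ++ [seq (v, r) | r <- BR.2] in
  (TS v'.+1 blk' rd' (lays st), rcons (rcons cur v) v').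

(* The order in which the pairs (B,R) are processed is not fixed by the paper;
   it is given by an arbitrary reordering function [pick]. *)
Definition pickT := nat -> seq (seq nat * seq nat) -> seq (seq nat * seq nat).

Definition process_u (pick : pickT) (t : nat) (p : tstate * seq nat) (u : nat)
  : tstate * seq nat :=
  let st := p.1 in
  let lower := flatten (take (size (lays st)).-1 (lays st)) in
  let Nup := undup (u :: [seq w <- lower | totAdj st w u]) in
  let pairs := [seq BR <- splits Nup |
                 redClique st BR.1 && (size BR.1 + size BR.2 <= t)] in
  foldl (fun q BR => add_pair q.1 q.2 BR) p (pick u pairs).

Definition step (pick : pickT) (t : nat) (st : tstate) : tstate :=
  let Li := last [::] (lays st) in
  let q := foldl (process_u pick t) (st, [::]) Li in
  TS (nv q.1) (blk q.1) (rd q.1) (rcons (lays st) q.2).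

Definition init_state : tstate := TS 1 [::] [::] [:: [:: 0]].

Fixpoint build (pick : pickT) (t : nat) (k : nat) : tstate :=
  match k with
  | 0 => init_state
  | k.+1 => step pick t (build pick t k)
  end.

(* The (infinite) graph W'_t: vertices and black edges of G'_t. *)
Definition Wvert (pick : pickT) (t : nat) (v : nat) : Prop :=
  exists k, v < nv (build pick t k).
Definition Wadj (pick : pickT) (t : nat) (x y : nat) : Prop :=
  exists k, blackAdj (build pick t k) x y.

Definition induced_triangle_free (pick : pickT) (t : nat) (S : seq nat) : Prop :=
  ~ exists a b c, [/\ a \in S, b \in S, c \in S,
                     [/\ a != b, b != c & a != c] &
                     [/\ Wadj pick t a b, Wadj pick t b c & Wadj pick t a c]].

(* Main.v *)
Require Import Defs.
From mathcomp Require Import all_boot.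
From mathcomp Require Import zify.
Import Defs.
Set Implicit Arguments. Unset Strict Implicit.

Lemma splits_prop s p : p \in splits s ->
  [/\ {subset p.1 <= s}, {subset p.2 <= s} &
     (uniq s -> forall x, x \in p.1 -> x \notin p.2)].
Proof.
elim: s p => [|x s IH] p /=.
  move=> H; have ->: p = ([::], [::]) by move: H; rewrite inE => /eqP.
  by split.
case/flatten_mapP => q /IH [H1 H2 H3].
rewrite !inE => /or3P [/eqP->|/eqP->|/eqP->] /=.
- split.
  + by move=> y; rewrite !inE => /orP[->|/H1 ->]; rewrite ?orbT.
  + by move=> y /H2 yy; rewrite inE yy orbT.
  + move=> /andP[xs us] y; rewrite in_cons => /orP[/eqP->|yq].
      by apply/negP => /H2; rewrite (negbTE xs).
    exact: H3.
- split.
  + by move=> y /H1 yy; rewrite inE yy orbT.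
  + by move=> y; rewrite !inE => /orP[->|/H2 ->]; rewrite ?orbT.
  + move=> /andP[xs us] y yq; rewrite in_cons negb_or (H3 us y yq) andbT.
    by apply/eqP => E; move: (H1 y yq); rewrite E (negbTE xs).
- split.
  + by move=> y /H1 yy; rewrite inE yy orbT.
  + by move=> y /H2 yy; rewrite inE yy orbT.
  + by move=> /andP[_ us]; exact: H3.
Qed.

Lemma mem_flatten_take (T : eqType) n (s : seq (seq T)) x :
  x \in flatten (take n s) -> x \in flatten s.
Proof.
by rewrite -{2}(cat_take_drop n s) flatten_cat mem_cat => ->.
Qed.

Lemma mem_last_flatten0 (T : eqType) (s : seq (seq T)) d x :
  x \in last d s -> (x \in d) || (x \in flatten s).
Proof.
elim: s d => [|l s IH] d /=; first by move=> ->.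
move/IH; rewrite mem_cat; case/orP=> [->|->]; by rewrite ?orbT.
Qed.

Lemma mem_last_flatten (T : eqType) (s : seq (seq T)) x :
  x \in last [::] s -> x \in flatten s.
Proof. by move/mem_last_flatten0. Qed.
Definition Inv (st : tstate) :=
  [/\ (forall x y, (x, y) \in blk st -> x < nv st /\ y < nv st),
      (forall x y, (x, y) \in rd st -> x < nv st /\ y < nv st),
      (forall x y, blackAdj st x y -> redAdj st x y -> False),
      (forall a b c, a != b -> b != c -> a != c ->
         blackAdj st a b -> blackAdj st b c -> blackAdj st a c -> False) &
      (forall x, x \in flatten (lays st) -> x < nv st)].

Lemma blackAdjC st x y : blackAdj st x y = blackAdj st y x.
Proof. by rewrite /blackAdj orbC. Qed.

Lemma newblk (st : tstate) (cur : seq nat) (BR : seq nat * seq nat) (x y : nat) : (x, y) \in blk (add_pair st cur BR).1 ->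
  (x, y) \in blk st \/ (cur != [::] /\ x = last 0 cur /\ y = nv st) \/
  (x = nv st /\ y \in BR.1) \/ (x = nv st /\ y = (nv st).+1).
Proof.
rewrite /add_pair /= !mem_cat => /orP[H|/orP[H|/orP[H|H]]].
- by left.
- case: cur H => [|c cs] //=; rewrite inE => /eqP [-> ->]; right; left; done.
- by case/mapP: H => b Hb [-> ->]; right; right; left.
- by move: H; rewrite inE => /eqP [-> ->]; right; right; right.
Qed.

Lemma newrd (st : tstate) (cur : seq nat) (BR : seq nat * seq nat) (x y : nat) : (x, y) \in rd (add_pair st cur BR).1 ->
  (x, y) \in rd st \/ (x = nv st /\ y \in BR.2).
Proof.
rewrite /add_pair /= !mem_cat => /orP[H|H]; first by left.
by case/mapP: H => b Hb [-> ->]; right.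
Qed.

Lemma last_in (cur : seq nat) : cur != [::] -> last 0 cur \in cur.
Proof. by case: cur => [|c cs] //= _; exact: mem_last. Qed.
Lemma add_pair_inv (st : tstate) (cur : seq nat) (BR : seq nat * seq nat) n0 :
 Inv st -> n0 <= nv st -> (forall x, x \in cur -> n0 <= x < nv st) ->
 (cur != [::] -> forall x, blackAdj st (last 0 cur) x -> n0 <= x) ->
 (forall x, x \in BR.1 -> x < n0) -> (forall x, x \in BR.2 -> x < n0) ->
 (forall x, x \in BR.1 -> x \notin BR.2) ->
 (forall x y, x \in BR.1 -> y \in BR.1 -> x != y -> redAdj st x y) ->
 let q := add_pair st cur BR in
 [/\ Inv q.1, n0 <= nv q.1,
   (forall x, x \in q.2 -> n0 <= x < nv q.1),
   (forall x, blackAdj q.1 (last 0 q.2) x -> n0 <= x) &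
   [/\ {subset blk st <= blk q.1}, {subset rd st <= rd q.1} & lays q.1 = lays st]].
Proof.
move=> [Hb Hr Hbr Htri Hl] Hn0 Hcur Hlast HB1 HB2 Hdisj Hcl q.
have Env : nv q.1 = (nv st).+2 by [].
have Elays : lays q.1 = lays st by [].
have Eq2 : q.2 = rcons (rcons cur (nv st)) (nv st).+1 by [].
have lastlt : cur != [::] -> last 0 cur < nv st by move=> /last_in /Hcur /andP[].
have subb : {subset blk st <= blk q.1} by move=> e he; rewrite /= mem_cat he.
have subr : {subset rd st <= rd q.1} by move=> e he; rewrite /= mem_cat he.
have Bq : forall x y, (x,y) \in blk q.1 -> x < (nv st).+2 /\ y < (nv st).+2.
  move=> x y /newblk [H|[[Hc [E1 E2]]|[[E1 E2]|[E1 E2]]]].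
  - by move: (Hb _ _ H); lia.
  - by move: (lastlt Hc); lia.
  - by move: (HB1 _ E2); lia.
  - by lia.
have bnd : forall x y, blackAdj q.1 x y -> x < (nv st).+2.
  by move=> x y /orP[] /Bq; lia.
have old : forall x y, blackAdj q.1 x y -> x < nv st -> y < nv st -> blackAdj st x y.
  move=> x y hxy hx hy; move: hxy; rewrite /blackAdj.
  move=> /orP[] /newblk [H|[[Hc [E1 E2]]|[[E1 E2]|[E1 E2]]]]; rewrite ?H ?orbT //; lia.
have nv' : forall y, blackAdj q.1 (nv st).+1 y -> y = nv st.
  move=> y; rewrite /blackAdj.
  move=> /orP[] /newblk [H|[[Hc [E1 E2]]|[[E1 E2]|[E1 E2]]]];
   first [ by move: (Hb _ _ H); lia | by move: (lastlt Hc); lia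
         | by move: (HB1 _ E2); lia | lia ].
have nvN : forall y, blackAdj q.1 (nv st) y ->
   [\/ y = (nv st).+1, (cur != [::] /\ y = last 0 cur) | y \in BR.1].
  move=> y; rewrite /blackAdj.
  move=> /orP[] /newblk [H|[[Hc [E1 E2]]|[[E1 E2]|[E1 E2]]]];
   first [ by exfalso; move: (Hb _ _ H); lia | by exfalso; move: (lastlt Hc); lia
         | by constructor 2 | by constructor 3 | by constructor 1; lia
         | by exfalso; move: (HB1 _ E2); lia | by exfalso; lia ].
have redv : forall y, y \in BR.2 -> blackAdj q.1 (nv st) y -> False.
  move=> y Hy /nvN [Ey|[Hc Ey]|Ey].
  - by move: (HB2 _ Hy); lia.
  - by move: (HB2 _ Hy) (Hcur _ (last_in Hc)); rewrite -Ey; lia.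
  - by move: (Hdisj _ Ey); rewrite Hy.
have vtri : forall y z, y != z -> blackAdj q.1 (nv st) y ->
    blackAdj q.1 (nv st) z -> blackAdj q.1 y z -> False.
  move=> y z yz /nvN Hy /nvN Hz Hyz.
  case: Hy => [Ey|[Hc Ey]|Ey].
  - move: Hyz; rewrite Ey => /nv' Ez.
    case: Hz => [Ez'|[Hc Ez']|Ez']; [lia | by move: (lastlt Hc); lia | by move: (HB1 _ Ez'); lia].
  - case: Hz => [Ez|[Hc' Ez]|Ez].
    + move: Hyz; rewrite Ez blackAdjC => /nv' Ey'. by move: (lastlt Hc); lia.
    + by move: yz; rewrite Ey Ez eqxx.
    + have hy : y < nv st by rewrite Ey; exact: lastlt Hc.
      have hz : z < nv st by move: (HB1 _ Ez); lia.
      have Hst := old _ _ Hyz hy hz.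
      move: (Hlast Hc z); rewrite -Ey => /(_ Hst). by move: (HB1 _ Ez); lia.
  - have hy : y < nv st by move: (HB1 _ Ey); lia.
    case: Hz => [Ez|[Hc' Ez]|Ez].
    + move: Hyz; rewrite Ez blackAdjC => /nv' Ey'. lia.
    + have hz : z < nv st by rewrite Ez; exact: lastlt Hc'.
      have Hst := old _ _ Hyz hy hz. rewrite blackAdjC in Hst.
      move: (Hlast Hc' y); rewrite -Ez => /(_ Hst). by move: (HB1 _ Ey); lia.
    + have hz : z < nv st by move: (HB1 _ Ez); lia.
      have Hst := old _ _ Hyz hy hz.
      exact: (Hbr _ _ Hst (Hcl _ _ Ey Ez yz)).
have v'2 : forall y z, y != z -> blackAdj q.1 (nv st).+1 y ->
    blackAdj q.1 (nv st).+1 z -> False.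
  by move=> y z yz /nv' Ey /nv' Ez; move: yz; rewrite Ey Ez eqxx.
split.
- split.
  + by move=> x y /Bq; rewrite Env.
  + move=> x y /newrd [H|[E1 E2]]; rewrite Env.
    * by move: (Hr _ _ H); lia.
    * by move: (HB2 _ E2); lia.
  + move=> x y HB; rewrite /redAdj => /orP[] /newrd [H|[E1 E2]].
    * move: (Hr _ _ H) => [hx hy].
      by apply: (Hbr x y (old _ _ HB hx hy)); rewrite /redAdj H.
    * by apply: (redv y E2); rewrite -E1.
    * move: (Hr _ _ H) => [hy hx].
      by apply: (Hbr x y (old _ _ HB hx hy)); rewrite /redAdj H orbT.
    * by apply: (redv x E2); rewrite -E1 blackAdjC.
  + move=> a b c ab bc ac Hab Hbc Hac.
    case: (eqVneq a (nv st).+1) => [Ea|na].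
      by move: Hab Hac; rewrite Ea; apply: v'2.
    case: (eqVneq b (nv st).+1) => [Eb|nb].
      by move: Hab Hbc; rewrite Eb blackAdjC; apply: v'2.
    case: (eqVneq c (nv st).+1) => [Ec|nc].
      by move: Hac Hbc; rewrite Ec blackAdjC [blackAdj _ b _]blackAdjC; apply: v'2.
    case: (eqVneq a (nv st)) => [Ea|na'].
      by move: Hab Hac; rewrite Ea => Hab Hac; apply: (vtri b c bc Hab Hac Hbc).
    case: (eqVneq b (nv st)) => [Eb|nb'].
      move: Hab Hbc; rewrite Eb blackAdjC => Hab Hbc.
      exact: (vtri a c ac Hab Hbc Hac).
    case: (eqVneq c (nv st)) => [Ec|nc'].
      move: Hac Hbc; rewrite Ec blackAdjC [blackAdj _ b _]blackAdjC => Hac Hbc.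
      exact: (vtri a b ab Hac Hbc Hab).
    have ha := bnd _ _ Hab. have hb := bnd _ _ Hbc.
    have hc : c < (nv st).+2 by rewrite blackAdjC in Hac; exact: bnd _ _ Hac.
    have ha' : a < nv st by move: na na'; lia.
    have hb' : b < nv st by move: nb nb'; lia.
    have hc' : c < nv st by move: nc nc'; lia.
    exact: (Htri a b c ab bc ac (old _ _ Hab ha' hb') (old _ _ Hbc hb' hc') (old _ _ Hac ha' hc')).
  + by move=> x; rewrite Elays Env => /Hl; lia.
- by rewrite Env; lia.
- move=> x; rewrite Eq2 Env mem_rcons inE mem_rcons inE.
  case/orP=> [/eqP->|]; first lia.
  case/orP=> [/eqP->|/Hcur]; lia.
- by move=> x; rewrite Eq2 last_rcons => /nv'; lia.
- by split.
Qed.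
Definition PInv n0 (L : seq (seq nat)) (p : tstate * seq nat) :=
  [/\ Inv p.1, n0 <= nv p.1, (forall x, x \in p.2 -> n0 <= x < nv p.1),
      (p.2 != [::] -> forall x, blackAdj p.1 (last 0 p.2) x -> n0 <= x) &
      lays p.1 = L].

Lemma fold_add n0 L (sb : tstate) (s : seq (seq nat * seq nat)) (p : tstate * seq nat) :
 PInv n0 L p -> {subset blk sb <= blk p.1} -> {subset rd sb <= rd p.1} ->
 (forall BR, BR \in s -> [/\ (forall x, x \in BR.1 -> x < n0),
     (forall x, x \in BR.2 -> x < n0), (forall x, x \in BR.1 -> x \notin BR.2) &
     (forall x y, x \in BR.1 -> y \in BR.1 -> x != y -> redAdj sb x y)]) ->
 let q := foldl (fun q BR => add_pair q.1 q.2 BR) p s in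
 [/\ PInv n0 L q, {subset blk sb <= blk q.1} & {subset rd sb <= rd q.1}].
Proof.
elim: s p => [|BR s IH] p HP Hsb Hsr Hs /=; first by split.
case: HP => HI Hn Hc Hl HL.
have [h1 h2 h3 h4] := Hs BR (mem_head _ _).
have Hcl : forall x y, x \in BR.1 -> y \in BR.1 -> x != y -> redAdj p.1 x y.
  move=> x y hx hy xy; move: (h4 x y hx hy xy); rewrite /redAdj.
  by case/orP => /Hsr ->; rewrite ?orbT.
have [I1 I2 I3 I4 [S1 S2 S3]] := add_pair_inv HI Hn Hc Hl h1 h2 h3 Hcl.
apply: IH.
- split; [exact: I1|exact: I2|exact: I3|move=> _; exact: I4|by rewrite S3].
- by move=> e /Hsb /S1.
- by move=> e /Hsr /S2.
- by move=> BR' h; apply: Hs; rewrite inE h orbT.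
Qed.

Lemma process_u_inv (pick : pickT) t n0 L (p : tstate * seq nat) u :
  (forall u s, perm_eq (pick u s) s) -> PInv n0 L p ->
  (forall x, x \in flatten L -> x < n0) -> u < n0 ->
  [/\ PInv n0 L (process_u pick t p u),
      {subset blk p.1 <= blk (process_u pick t p u).1} &
      {subset rd p.1 <= rd (process_u pick t p u).1}].
Proof.
move=> Hpick HP HL hu.
have HL' : lays p.1 = L by case: HP.
rewrite /process_u.
apply: fold_add => //.
move=> BR; rewrite (perm_mem (Hpick _ _)) mem_filter => /andP[/andP[Hrc _] Hspl].
have [s1 s2 s3] := splits_prop Hspl.
have HN : forall x, x \in BR.1 \/ x \in BR.2 -> x < n0.
  move=> x hx; have : x \in undup (u :: [seq w <- flatten (take (size (lays p.1)).-1 (lays p.1)) | totAdj p.1 w u]).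
    by case: hx => [/s1|/s2].
  rewrite mem_undup inE => /orP[/eqP->//|].
  rewrite mem_filter => /andP[_ /mem_flatten_take]; rewrite HL'; exact: HL.
split.
- by move=> x hx; apply: HN; left.
- by move=> x hx; apply: HN; right.
- exact: (s3 (undup_uniq _)).
- move=> x y hx hy xy; move: Hrc => /allP Hrc.
  by move: (allP (Hrc x hx) y hy); rewrite (negbTE xy).
Qed.

Lemma fold_proc (pick : pickT) t n0 L (us : seq nat) (p : tstate * seq nat) :
  (forall u s, perm_eq (pick u s) s) -> PInv n0 L p ->
  (forall x, x \in flatten L -> x < n0) -> (forall u, u \in us -> u < n0) ->
  PInv n0 L (foldl (process_u pick t) p us) /\
  {subset blk p.1 <= blk (foldl (process_u pick t) p us).1}.
Proof.
elim: us p => [|u us IH] p Hpk HP HL Hus /=; first by split.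
have [HP' Sb _] := process_u_inv t Hpk HP HL (Hus u (mem_head _ _)).
have Hus' : forall u', u' \in us -> u' < n0 by move=> u' h; apply: Hus; rewrite inE h orbT.
have [HP'' Sb'] := IH _ Hpk HP' HL Hus'.
by split => // e /Sb /Sb'.
Qed.

Lemma step_inv (pick : pickT) t st : (forall u s, perm_eq (pick u s) s) ->
  Inv st -> Inv (step pick t st) /\ {subset blk st <= blk (step pick t st)}.
Proof.
move=> Hpk HI.
have HL : forall x, x \in flatten (lays st) -> x < nv st by case: HI.
have HP : PInv (nv st) (lays st) (st, [::]) by split.
have Hus : forall u, u \in last [::] (lays st) -> u < nv st.
  by move=> u /mem_last_flatten; exact: HL.
have [[[Hb Hr Hbr Htri Hl] Hn Hc _ Hlay] Sb] := fold_proc t Hpk HP HL Hus.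
split; last done.
split.
- exact: Hb.
- exact: Hr.
- exact: Hbr.
- exact: Htri.
- move=> x /=; rewrite flatten_rcons mem_cat => /orP[h|/Hc /andP[] //].
  by apply: Hl; rewrite Hlay.
Qed.

Lemma build_inv (pick : pickT) t k : (forall u s, perm_eq (pick u s) s) ->
  Inv (build pick t k).
Proof.
move=> Hpk; elim: k => [|k IH] /=.
- split => //=; move=> x; rewrite inE => /eqP -> //.
- exact: (step_inv t Hpk IH).1.
Qed.

Lemma build_mono (pick : pickT) t k k' : (forall u s, perm_eq (pick u s) s) ->
  k <= k' -> {subset blk (build pick t k) <= blk (build pick t k')}.
Proof.
move=> Hpk; elim: k' => [|k' IH].
  by rewrite leqn0 => /eqP ->.
rewrite leq_eqVlt => /orP[/eqP -> //|/IH S].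
by move=> e /S He; exact: (step_inv t Hpk (build_inv t k' Hpk)).2 e He.
Qed.

Theorem mainTheorem14 (t : nat) (pick : pickT) :
  0 < t ->
  (forall u s, perm_eq (pick u s) s) ->
  forall S : seq nat, (forall v, v \in S -> Wvert pick t v) ->
  induced_triangle_free pick t S.
Proof.
move=> _ Hpk S _ [a [b [c [ha hb hc [ab bc ac] [[k1 H1] [k2 H2] [k3 H3]]]]]].
pose K := maxn k1 (maxn k2 k3).
have lift : forall k x y, k <= K -> blackAdj (build pick t k) x y ->
    blackAdj (build pick t K) x y.
  move=> k x y /(build_mono Hpk) Sb; rewrite /blackAdj.
  by case/orP => /Sb ->; rewrite ?orbT.
have [_ _ _ Htri _] := build_inv t K Hpk.
apply: (Htri a b c ab bc ac).
- by apply: (lift k1) => //; rewrite /K; lia.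
- by apply: (lift k2) => //; rewrite /K; lia.
- by apply: (lift k3) => //; rewrite /K; lia.
Qed.
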